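(* Let $n\ge 2$ be an integer. If $G$ is a graph on $2n+1$ vertices with at least $n^2+n$ edges such that $G$ does not contain two distinct vertices of the same degree joined by a path of length three, then $G$ is isomorphic to the complete bipartite graph $K_{n,n+1}$. (Equivalently, $K_{n,n+1}$ is the unique such graph.)
   Context: A path of length three joining vertices $a$ and $b$ is a path $a\,x\,y\,b$ with four distinct vertices and three edges $ax,xy,yb$. Graphs are finite and simple. *)

(* Defs.v *)
From mathcomp Require Import all_boot.
Set Implicit Arguments. Unset Strict Implicit. Unset Printing Implicit Defensive.

Definition simple_graph (T : finType) (e : rel T) : Prop :=
  symmetric e /\ irreflexive e.

Definition edge_set (T : finType) (e : rel T) : {set {set T}} :=
  [set E : {set T} | [exists x, exists y, e x y && (E == [set x; y])]].

Definition num_edges (T : finType) (e : rel T) : nat := #|edge_set e|.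

Definition deg (T : finType) (e : rel T) (x : T) : nat := #|[set y | e x y]|.

Definition path3 (T : finType) (e : rel T) (a b : T) : Prop :=
  exists x y : T, uniq [:: a; x; y; b] && [&& e a x, e x y & e y b].

Definition Kbip (n m : nat) : rel ('I_n + 'I_m)%type :=
  fun u v => match u, v with
             | inl _, inr _ | inr _, inl _ => true
             | _, _ => false
             end.

Definition graph_iso (T U : finType) (e : rel T) (f : rel U) : Prop :=
  exists g : T -> U, bijective g /\ forall x y, f (g x) (g y) = e x y.

(* Main.v *)
Require Import Defs.
From mathcomp Require Import all_boot.
From mathcomp Require Import zify.
Set Implicit Arguments. Unset Strict Implicit. Unset Printing Implicit Defensive.
Section Hand.
Variables (T : finType) (e : rel T).
Hypothesis esym : symmetric e.
Hypothesis eirr : irreflexive e.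

Lemma deg_sum x : deg e x = \sum_y (e x y : nat).
Proof.
rewrite /deg -sum1_card big_mkcond /=; apply: eq_bigr => y _.
by rewrite inE; case: (e x y).
Qed.

Lemma handshake : 2 * num_edges e <= \sum_x deg e x.
Proof.
pose pairs := [set p : T * T | e p.1 p.2].
have -> : \sum_x deg e x = #|pairs|.
  under eq_bigr do rewrite deg_sum.
  rewrite pair_big /= -sum1_card [RHS]big_mkcond /=; apply: eq_bigr => [[a b]] _; rewrite inE /=.
  by case: (e a b).
pose lo := [set p in pairs | enum_rank p.1 < enum_rank p.2].
pose hi := [set p in pairs | enum_rank p.2 < enum_rank p.1].
pose f := fun p : T * T => [set p.1; p.2].
have sub : forall (S : {set T * T}),
  (forall a b, e a b -> (a, b) \in S \/ (b, a) \in S) -> edge_set e \subset f @: S.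
  move=> S hS; apply/subsetP => E; rewrite inE => /existsP [a /existsP [b /andP [eab /eqP ->]]].
  case: (hS a b eab) => h; first by apply/imsetP; exists (a, b).
  by apply/imsetP; exists (b, a) => //; rewrite /f /= setUC.
have hne : forall a b, e a b -> enum_rank a != enum_rank b.
  by move=> a b eab; apply/eqP => /enum_rank_inj hab; move: eab; rewrite hab eirr.
have Hlo : #|edge_set e| <= #|lo|.
  apply: leq_trans (leq_imset_card f lo); apply: subset_leq_card; apply: sub => a b eab.
  have := hne a b eab; rewrite neq_ltn => /orP [h|h].
    by left; rewrite !inE /= eab h.
  by right; rewrite !inE /= (esym b a) eab h.
have Hhi : #|edge_set e| <= #|hi|.
  apply: leq_trans (leq_imset_card f hi); apply: subset_leq_card; apply: sub => a b eab.
  have := hne a b eab; rewrite neq_ltn => /orP [h|h].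
    by right; rewrite !inE /= (esym b a) eab h.
  by left; rewrite !inE /= eab h.
have : #|lo :|: hi| <= #|pairs|.
  by apply: subset_leq_card; apply/subsetP => p; rewrite !inE => /orP [/andP [] | /andP []].
rewrite cardsU.
have -> : lo :&: hi = set0.
  apply/setP => p; rewrite !inE.
  case: (e p.1 p.2) => //=.
  by case: ltngtP.
rewrite cards0 subn0 /num_edges => H.
lia.
Qed.
End Hand.

Section Gen.
Variable T : finType.

Lemma card_inj_lt (f : T -> nat) (S : {set T}) K :
  {in S &, injective f} -> (forall y, y \in S -> f y < K) -> #|S| <= K.
Proof.
move=> finj fK.
have u : uniq (map f (enum S)).
  rewrite map_inj_in_uniq ?enum_uniq //.
  by move=> a b; rewrite !mem_enum; apply: finj.
rewrite cardE -(size_map f) -(size_iota 0 K).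
apply: uniq_leq_size u _ => z /mapP [y]; rewrite mem_enum => yS ->.
by rewrite mem_iota /= add0n fK.
Qed.

Lemma injsum (f : T -> nat) : forall k (S : {set T}), #|S| = k ->
  {in S &, injective f} -> k * (k - 1) <= 2 * \sum_(y in S) f y.
Proof.
elim=> [|k IH] S cS finj; first by [].
have [y0 y0S] : exists y0, y0 \in S.
  by apply/set0Pn; rewrite -card_gt0 cS.
case: (@arg_maxnP T y0 (mem S) f y0S) => y yS0 ymax.
have yS : y \in S by [].
have cS' : #|S :\ y| = k by move: cS; rewrite (cardsD1 y S) yS; case.
have finj' : {in S :\ y &, injective f}.
  by move=> a b; rewrite !inE => /andP [_ aS] /andP [_ bS]; apply: finj.
have := IH _ cS' finj'.
have kle : k <= f y.
  rewrite -cS'; apply: card_inj_lt finj' _ => z; rewrite !inE => /andP [zy zS].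
  have hz : f z <= f y := ymax z zS.
  rewrite ltn_neqAle hz andbT; apply/eqP => fzy.
  by move/eqP: zy; apply; apply: finj.
rewrite (big_setD1 y yS) /=.
nia.
Qed.

Lemma sum_sub (F : T -> nat) (S S' : {set T}) :
  S \subset S' -> \sum_(y in S) F y <= \sum_(y in S') F y.
Proof.
move=> sub; rewrite [X in _ <= X](big_setID S) /=.
by rewrite (setIidPr sub) leq_addr.
Qed.

Lemma sum_restrict (F : T -> nat) (I : {set T}) (p : pred T) :
  \sum_(y in [set y in I | p y]) F y = \sum_(y in I) (if p y then F y else 0).
Proof.
rewrite big_mkcond [RHS]big_mkcond; apply: eq_bigr => y _; rewrite !inE.
by case: (y \in I); case: (p y).
Qed.

Lemma arith_y1 n t k a SA SD p Neg B :
  k + t = n + 1 -> 3 <= t ->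
  2 * (n * n + n) + Neg <= 2 * ((n + t) * k) + SA + B -> B <= 2 ->
  SA + SD = a * (2 * t - 1) -> a * (a - 1) <= 2 * SD -> a <= 2 * t - 2 ->
  2 * t - 2 <= p -> p * (p - 1) <= 2 * Neg -> False.
Proof. move=> *. nia. Qed.
Lemma arith_noy1 n t k a SA SD B :
  k + t = n + 1 -> 3 <= t ->
  2 * (n * n + n) <= 2 * ((n + t) * k) + SA + B -> B <= 2 ->
  SA + SD = a * (2 * t - 2) -> a * (a - 1) <= 2 * SD -> a <= 2 * t - 3 -> False.
Proof. move=> *. nia. Qed.


Lemma sq_mono m q : m <= q -> m * (m - 1) <= q * (q - 1).
Proof. by move=> h; apply: leq_mul => //; apply: leq_sub2r. Qed.

Lemma arith_P4 k NegC Def Pos :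
  2 * ((k + 1) * (k + 1) + (k + 1)) + NegC + Def <= 2 * ((k + 1 + 2) * k) + Pos ->
  4 + NegC <= Pos.
Proof. move=> h. nia. Qed.

Lemma arith_SA5 a SA SD M : SA + SD = a * M -> M = 3 -> a * (a - 1) <= 2 * SD -> a <= 2 ->
  SA <= 5.
Proof. move=> h1 hM h2 h3; subst M. have : a = 0 \/ a = 1 \/ a = 2 by lia. case=> [ha|[ha|ha]]; subst a; lia. Qed.


Lemma card1_eq (S : {set T}) a b : #|S| <= 1 -> a \in S -> b \in S -> a = b.
Proof.
move=> cS aS bS; apply/eqP/negPn/negP => ab.
have : [set a; b] \subset S by rewrite subUset !sub1set aS bS.
by move/subset_leq_card; rewrite cards2 ab; lia.
Qed.

End Gen.

Section Iso.
Variables (T : finType) (e : rel T) (n : nat).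

Lemma iso_of_bip (I : {set T}) (y0 c0 : T) (y0I : y0 \in I) (c0C : c0 \in ~: I)
  (hI : #|I| = n.+1) (hC : #|~: I| = n) :
  (forall u v, e u v = ((u \in I) != (v \in I))) -> graph_iso e (@Kbip n n.+1).
Proof.
move=> he.
pose g (u : T) : ('I_n + 'I_n.+1)%type :=
  if u \in I then inr (cast_ord hI (enum_rank_in y0I u))
  else inl (cast_ord hC (enum_rank_in c0C u)).
pose h (s : ('I_n + 'I_n.+1)%type) : T :=
  match s with
  | inl i => enum_val (cast_ord (esym hC) i)
  | inr j => enum_val (cast_ord (esym hI) j)
  end.
have gK : cancel g h.
  move=> u; rewrite /g /h; case: ifPn => uI.
    by rewrite cast_ordK enum_rankK_in.
  by rewrite cast_ordK enum_rankK_in // inE.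
have hK : cancel h g.
  case=> [i|j]; rewrite /g /h.
    have := enum_valP (cast_ord (esym hC) i); rewrite inE => /negbTE ->.
    by rewrite enum_valK_in cast_ordKV.
  have := enum_valP (cast_ord (esym hI) j) => ->.
  by rewrite enum_valK_in cast_ordKV.
exists g; split; first by exists h.
move=> u v; rewrite he /g.
by case: (u \in I); case: (v \in I).
Qed.
End Iso.

Section Main.
Variables (T : finType) (e : rel T) (n : nat).
Hypothesis sym_e : symmetric e.
Hypothesis eirr : irreflexive e.
Hypothesis HP : forall a b : T, a != b -> deg e a = deg e b -> ~ path3 e a b.

Ltac clear_nonarith := repeat match goal with
  | [ H : ?P |- _ ] => lazymatch P with
      | is_true (_ <= _) => fail
      | @eq _ ?a _ => lazymatch type of a with nat => fail | _ => clear H end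
      | is_true (~~ (?a == _)) => lazymatch type of a with nat => fail | _ => clear H end
      | is_true (?a == _) => lazymatch type of a with nat => fail | _ => clear H end
      | _ => clear H
      end
  end.
Ltac flia := clear_nonarith; lia.
Ltac fnia := clear_nonarith; nia.

Definition Nb (y : T) : {set T} := [set z | e y z].

Lemma inNb y z : (z \in Nb y) = e y z.
Proof. by rewrite inE. Qed.

Lemma degE y : deg e y = #|Nb y|.
Proof. by []. Qed.

Lemma neq_e a b : e a b -> a != b.
Proof. by move=> h; apply/eqP => ab; move: h; rewrite ab eirr. Qed.

Lemma noP4 a u v b : a != b -> deg e a = deg e b -> e a u -> e u v -> e v b ->
  a != v -> u != b -> False.
Proof.
move=> ab dab au uv vb av ub; apply: (HP ab dab); exists u, v.
rewrite /= !inE au uv vb !andbT (negbTE (neq_e au)) (negbTE (neq_e uv)).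
by rewrite (negbTE (neq_e vb)) (negbTE av) (negbTE ab) (negbTE ub).
Qed.

Hypothesis n2 : 2 <= n.
Hypothesis cardT : #|T| = 2 * n + 1.
Hypothesis medges : n ^ 2 + n <= num_edges e.

Lemma deg_lt y : deg e y < #|T|.
Proof.
rewrite degE -cardsT; apply: proper_card; rewrite properT; apply/eqP => h.
by have := in_setT y; rewrite -h inNb eirr.
Qed.

Lemma sumdeg_ge : 2 * (n * n + n) <= \sum_y deg e y.
Proof.
apply: leq_trans (handshake sym_e eirr); move: medges; rewrite expnS expn1. flia.
Qed.

Lemma sum0_each (F : T -> nat) (S : {set T}) y :
  \sum_(z in S) F z = 0 -> y \in S -> F y = 0.
Proof. by move=> h yS; move: h; rewrite (big_setD1 y yS) /=; case: (F y). Qed.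

Section WithX.
Variable x : T.
Hypothesis xmax : forall y, deg e y <= deg e x.
Let I := Nb x.
Let k := #|~: I|.

Lemma memI y : (y \in I) = e x y.
Proof. by rewrite /I inNb. Qed.

Lemma L2 y : deg e y <= #|Nb y :&: I| + k.
Proof.
rewrite degE -(cardsID I (Nb y)) leq_add2l /k.
by apply: subset_leq_card; rewrite setDE subsetIr.
Qed.

Lemma L1 y y' : y \in I -> y' \in I -> y != y' -> deg e y = deg e y' ->
  Nb y' :&: I \subset [set y].
Proof.
move=> yI y'I yy' dyy'; apply/subsetP => w; rewrite !inE => /andP [y'w xw].
apply/negPn/negP => wy.
rewrite /I inNb in yI y'I.
apply: (noP4 yy' dyy' (u := x) (v := w)) => //.
all: try by rewrite sym_e.
- by rewrite eq_sym.
- by apply: neq_e; rewrite -inNb.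
Qed.

Lemma L1c y y' : y \in I -> y' \in I -> y != y' -> deg e y = deg e y' ->
  #|Nb y' :&: I| <= 1.
Proof.
move=> yI y'I yy' d; rewrite -(cards1 y); apply: subset_leq_card; exact: L1.
Qed.

Lemma L3 y1 z : y1 \in I -> deg e y1 = deg e x -> z \in Nb y1 :&: I ->
  Nb z :&: I \subset [set y1].
Proof.
move=> y1I dy1; rewrite !inE => /andP [y1z xz]; apply/subsetP => w.
rewrite !inE => /andP [zw xw]; apply/negPn/negP => wy1.
rewrite /I inNb in y1I.
apply: (noP4 (neq_e y1I) (esym dy1) (u := w) (v := z)) => //.
all: try by rewrite sym_e.
exact: neq_e xz.
Qed.

Lemma L5 (Q : {set T}) : Q \subset I ->
  (forall z, z \in Q -> exists2 u, u \in I :\: Q & e z u) -> {in Q &, injective (deg e)}.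
Proof.
move=> QI hQ z z' zQ z'Q dz; apply/eqP/negPn/negP => zz'.
have [u] := hQ z' z'Q; rewrite !inE => /andP [uQ uI] z'u.
have := subsetP (L1 (subsetP QI z zQ) (subsetP QI z' z'Q) zz' dz) u.
rewrite !inE z'u uI => /(_ isT) /eqP uz.
by move: uQ; rewrite uz zQ.
Qed.


Let D := deg e x.
Let Pos := \sum_(y in I) (deg e y - k).
Let NegC := \sum_(y in I) (k - deg e y).
Let Def := \sum_(v in ~: I) (D - deg e v).

Lemma kD : D + k = #|T|.
Proof. by rewrite /D degE -/I /k cardsC. Qed.

Lemma KI : 2 * (n * n + n) + NegC + Def <= 2 * (D * k) + Pos.
Proof.
have h1 : \sum_(y in I) deg e y + NegC = D * k + Pos.
  rewrite /NegC /Pos -big_split /= (eq_bigr (fun y => k + (deg e y - k))).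
    by rewrite big_split /= sum_nat_const.
  move=> y _; flia.
have h2 : \sum_(v in ~: I) deg e v + Def = k * D.
  rewrite /Def -big_split /= (eq_bigr (fun y => D)).
    by rewrite sum_nat_const.
  move=> y _; have := xmax y; rewrite -/D; flia.
have h3 : \sum_y deg e y = \sum_(y in I) deg e y + \sum_(v in ~: I) deg e v.
  rewrite (bigID (fun y => y \in I)) /=; congr (_ + _).
  by apply: eq_bigl => y; rewrite in_setC.
have := sumdeg_ge; rewrite h3; flia.
Qed.

Lemma Dge : n + 1 <= D.
Proof.
have : \sum_y deg e y <= #|T| * D.
  rewrite -sum_nat_const; apply: leq_sum => y _; exact: xmax.
have := sumdeg_ge; rewrite cardT; fnia.
Qed.

Lemma Dle : D <= 2 * n.
Proof. by have := deg_lt x; rewrite cardT -/D; flia. Qed.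


Let A := [set y in I | k + 2 <= deg e y].
Let B := [set y in I | deg e y == k + 1].

Lemma Pos_le : Pos <= \sum_(y in A) (deg e y - k) + #|B|.
Proof.
rewrite /A /B sum_restrict -sum1_card sum_restrict -big_split /=.
apply: leq_sum => y _.
by case: ifPn => h1; case: ifPn => h2; move: h1 h2; flia.
Qed.

Lemma A_inj : {in A &, injective (deg e)}.
Proof.
move=> y y' /setIdP [yI yA] /setIdP [y'I y'A] d.
apply/eqP/negPn/negP => yy'.
have := L1c yI y'I yy' d; have := L2 y'; flia.
Qed.

Lemma B_card : #|B| <= 2.
Proof.
case: (set_0Vmem B) => [->|[b bB]]; first by rewrite cards0.
have /setIdP [bI /eqP db] := bB.
have : 0 < #|Nb b :&: I| by have := L2 b; flia.
rewrite card_gt0 => /set0Pn [w wN].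
have : B :\ b \subset [set w].
  apply/subsetP => b' /setD1P [b'b /setIdP [b'I /eqP db']].
  have := subsetP (L1 b'I bI b'b (etrans db' (esym db))) w wN.
  by rewrite !inE => /eqP ->.
move/subset_leq_card; rewrite cards1 => h.
by rewrite (cardsD1 b B) bB; flia.
Qed.

Lemma NegC_ge (S : {set T}) : S \subset I -> {in S &, injective (deg e)} ->
  (forall y, y \in S -> deg e y <= k) -> #|S| * (#|S| - 1) <= 2 * NegC.
Proof.
move=> SI Sinj Sk.
have := @injsum T (fun y => k - deg e y) #|S| S erefl.
have finj : {in S &, injective (fun y => k - deg e y)}.
  move=> y y' yS y'S h; apply: Sinj => //.
  by have := Sk y yS; have := Sk y' y'S; move: h; flia.
move=> /(_ finj) h; apply: leq_trans h _.
by rewrite leq_mul2l /=; apply: sum_sub.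
Qed.

Lemma SA_eq (M : nat) (S : {set T}) : (forall y, y \in S -> k <= deg e y <= M) ->
  \sum_(y in S) (deg e y - k) + \sum_(y in S) (M - deg e y) = #|S| * (M - k).
Proof.
move=> h; rewrite -big_split /= -sum_nat_const; apply: eq_bigr => y yS.
by have := h y yS; flia.
Qed.


Lemma inj_const_card (S : {set T}) c : {in S &, injective (deg e)} ->
  (forall y, y \in S -> deg e y = c) -> #|S| <= 1.
Proof.
move=> Sinj Sc; apply: (@card_inj_lt T (fun _ => 0)) => //.
by move=> y y' yS y'S _; apply: Sinj; rewrite ?Sc.
Qed.

Lemma pend_card y1 : deg e y1 = D -> D <= #|Nb y1 :&: I| + k.
Proof. by move=> d; rewrite -d; apply: L2. Qed.

Lemma pend_inj y1 : y1 \in I -> {in Nb y1 :&: I &, injective (deg e)}.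
Proof.
move=> y1I; apply: L5; first exact: subsetIr.
move=> z /setIP [y1z zI]; exists y1; last by rewrite sym_e -inNb.
by apply/setDP; split => //; apply/setIP => -[]; rewrite inNb eirr.
Qed.

Lemma pend_deg y1 z : y1 \in I -> deg e y1 = D -> z \in Nb y1 :&: I -> deg e z <= k + 1.
Proof.
move=> y1I d zP; have := L3 y1I d zP; move/subset_leq_card; rewrite cards1.
by have := L2 z; flia.
Qed.

Lemma A_bound M : (forall y, y \in A -> deg e y <= M) -> k + 2 <= M ->
  [/\ \sum_(y in A) (deg e y - k) + \sum_(y in A) (M - deg e y) = #|A| * (M - k),
      #|A| * (#|A| - 1) <= 2 * \sum_(y in A) (M - deg e y) &
      #|A| <= M - k - 1].
Proof.
move=> AM kM; split.
- apply: SA_eq => y yA; rewrite AM // andbT.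
  by have /setIdP [_ h] := yA; flia.
- apply: injsum => //; move=> y y' yA y'A h; apply: A_inj => //.
  have /setIdP [_ h1] := yA; have /setIdP [_ h2] := y'A.
  by have := AM y yA; have := AM y' y'A; move: h; flia.
- apply: (@card_inj_lt T (fun y => M - deg e y)).
    move=> y y' yA y'A h; apply: A_inj => //.
    by have := AM y yA; have := AM y' y'A; move: h; flia.
  move=> y yA; have /setIdP [_ h1] := yA; have := AM y yA; flia.
Qed.

Lemma case_t3 : n + 3 <= D -> False.
Proof.
move=> Dn; have ki := KI; have pl := Pos_le; have bc := B_card.
have dk := kD; rewrite cardT in dk.
have Dl := Dle.
case: (boolP [exists y in I, deg e y == D]) => [/existsP [y1 /andP [y1I /eqP dy1]] | noy1].
- have [h1 h2 h3] := @A_bound D (fun y _ => xmax y) ltac:(flia).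
  set P := Nb y1 :&: I.
  have pc : D <= #|P| + k := pend_card dy1.
  have pbc : #|P :&: B| <= 1.
    apply: (@inj_const_card _ (k + 1)).
      by move=> y y' /setIP [yP _] /setIP [y'P _]; apply: (pend_inj y1I).
    by move=> y /setIP [_ /setIdP [_ /eqP]].
  have qc := cardsID B P.
  have ng : #|P :\: B| * (#|P :\: B| - 1) <= 2 * NegC.
    apply: NegC_ge.
    - by apply: subset_trans (subsetDl _ _) (subsetIr _ _).
    - by move=> y y' /setDP [yP _] /setDP [y'P _]; apply: (pend_inj y1I).
    - move=> y /setDP [yP yB]; have := pend_deg y1I dy1 yP.
      have /setIP [_ yI] := yP; move: yB; rewrite inE yI /=; flia.
  apply: (@arith_y1 n (D - n) k #|A| (\sum_(y in A) (deg e y - k))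
     (\sum_(y in A) (D - deg e y)) #|P :\: B| NegC #|B|) => //; try flia.
- have AM : forall y, y \in A -> deg e y <= D - 1.
    move=> y /setIdP [yI _]; have := xmax y; rewrite -/D.
    move: noy1; rewrite negb_exists => /forallP /(_ y); rewrite yI /= => hy.
    flia.
  have [h1 h2 h3] := @A_bound (D - 1) AM ltac:(flia).
  by apply: (@arith_noy1 n (D - n) k #|A| (\sum_(y in A) (deg e y - k))
     (\sum_(y in A) (D - 1 - deg e y)) #|B|) => //; flia.
Qed.


Lemma B_twin b : b \in B -> #|B| = 2 -> exists2 b', b' \in B & Nb b :&: I \subset [set b'].
Proof.
move=> bB cB; have : 0 < #|B :\ b| by move: cB; rewrite (cardsD1 b B) bB; flia.
rewrite card_gt0 => /set0Pn [b' /setD1P [b'b b'B]]; exists b' => //.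
have /setIdP [bI /eqP db] := bB; have /setIdP [b'I /eqP db'] := b'B.
by apply: L1 => //; rewrite db db'.
Qed.

Lemma notA_deg y : y \in I -> y \notin A -> deg e y <= k + 1.
Proof. by move=> yI; rewrite inE yI /= -ltnNge; flia. Qed.

Lemma notB_deg y : y \in I -> y \notin B -> deg e y != k + 1.
Proof. by move=> yI; rewrite inE yI. Qed.

Lemma case_t2 : D = n + 2 -> False.
Proof.
move=> Dn; have dk := kD; rewrite cardT in dk.
have ki := KI; have pl := Pos_le; have bc := B_card.
have kn : k + 1 = n by flia.
have P4 : 4 + NegC <= Pos.
  by move: ki; rewrite Dn -kn; apply: arith_P4.
have Dk3 : D = k + 3 by flia.
have P4' : 4 + NegC <= \sum_(y in A) (deg e y - k) + #|B| := leq_trans P4 pl.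
clear ki pl P4 Dn dk.
case: (boolP [exists y in I, deg e y == k + 2]) => [/existsP [a0 /andP [a0I /eqP da0]] | noa0].
-
  have a0A : a0 \in A by rewrite inE a0I da0 /=.
  set W := Nb a0 :&: I.
  have Wc : 2 <= #|W| by have := L2 a0; rewrite -/W da0; flia.
  have Winj : {in W &, injective (deg e)} := pend_inj a0I.
  have a0W : a0 \notin W by rewrite inE inNb eirr.
  case: (boolP [exists y in I, deg e y == D]) => [/existsP [y1 /andP [y1I /eqP dy1]] | noy1].
  +
    have [h1 h2 h3] := @A_bound D (fun y _ => xmax y) ltac:(flia).
    have SA5 : \sum_(y in A) (deg e y - k) <= 5.
      by apply: (arith_SA5 h1) => //; flia.
    have P5 : 4 + NegC <= 5 + #|B| := leq_trans P4' (leq_add SA5 (leqnn _)).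
    clear h1 h2 h3 SA5 P4'.
    set P := Nb y1 :&: I.
    have pc : D <= #|P| + k := pend_card dy1.
    have Pdeg : forall z, z \in P -> deg e z <= k + 1 := fun z => pend_deg y1I dy1 (z := z).
    have a0P : a0 \notin P.
      by apply/negP => /Pdeg; flia.
    have y1P : y1 \notin P by rewrite inE inNb eirr.
    have y1W : y1 \notin W.
      apply/negP => /setIP [a0y1 _].
      have : a0 \in P by apply/setIP; split => //; rewrite inNb sym_e -inNb.
      by rewrite (negbTE a0P).
    have PW : P :&: W = set0.
      apply/setP => w; rewrite inE [RHS]inE; apply/negP => /andP [wP wW].
      have := subsetP (L3 y1I dy1 wP) a0.
      have /setIP [a0w _] := wW.
      have h : a0 \in Nb w :&: I by apply/setIP; split => //; rewrite inNb sym_e -inNb.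
      move=> /(_ h); rewrite inE => /eqP a0y1.
      by move: da0; rewrite a0y1 dy1; flia.
    set Q := P :|: W.
    have Qc : #|Q| = #|P| + #|W| by rewrite cardsU PW cards0 subn0.
    have QI : Q \subset I by rewrite subUset !subsetIr.
    have Qinj : {in Q &, injective (deg e)}.
      apply: L5 => // z /setUP [zP|zW].
      * exists y1; first by rewrite inE /= inE negb_or y1P y1W.
        by have /setIP [h _] := zP; rewrite sym_e -inNb.
      * exists a0; first by rewrite inE /= inE negb_or a0P a0W.
        by have /setIP [h _] := zW; rewrite sym_e -inNb.
    have Qdeg : forall z, z \in Q -> deg e z <= k + 1.
      move=> z /setUP [zP|zW]; first exact: Pdeg.
      have zI : z \in I by have /setIP [_ h] := zW.
      apply: notA_deg => //; apply/negP => zA.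
      have : deg e z <= D := xmax z.
      rewrite leq_eqVlt => /orP [/eqP dz|dz].
        have y1A : y1 \in A by apply/setIdP; split => //; rewrite dy1; flia.
        have zy1 : z = y1 := A_inj zA y1A (etrans dz (esym dy1)).
        by move: y1W; rewrite -zy1 zW.
      have : deg e z = deg e a0.
        by have /setIdP [_ hz] := zA; rewrite da0; flia.
      by move/(A_inj zA a0A) => za0; move: a0W; rewrite -za0 zW.
    have QB : #|Q :&: B| <= 1.
      apply: (@inj_const_card _ (k + 1)).
        by move=> y y' /setIP [yQ _] /setIP [y'Q _]; apply: Qinj.
      by move=> y /setIP [_ /setIdP [_ /eqP]].
    have qc := cardsID B Q.
    have ng : #|Q :\: B| * (#|Q :\: B| - 1) <= 2 * NegC.
      apply: NegC_ge.
      - by apply: subset_trans (subsetDl _ _) QI.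
      - by move=> y y' /setDP [yQ _] /setDP [y'Q _]; apply: Qinj.
      - move=> y /setDP [yQ yB]; have := Qdeg y yQ.
        have yI := subsetP QI y yQ; have := notB_deg yI yB; flia.
    have q4 : 4 <= #|Q :\: B| by flia.
    have := sq_mono q4; flia.
  +
    have Aa0 : forall y, y \in A -> y = a0.
      move=> y yA; apply: A_inj => //.
      have /setIdP [yI hy] := yA.
      move: noy1; rewrite negb_exists => /forallP /(_ y); rewrite yI /= => hy'.
      have := xmax y; rewrite -/D; flia.
    have SA2 : \sum_(y in A) (deg e y - k) <= 2.
      rewrite (big_setD1 a0 a0A) /= big1 ?da0; first flia.
      by move=> y /setD1P [ya0 /Aa0 ya0']; move: ya0; rewrite ya0' eqxx.
    have cB : #|B| = 2 by flia.
    have NegC0 : NegC = 0 by flia.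
    have Wdeg : forall w, w \in W -> deg e w <= k.
      move=> w wW; have wI : w \in I by have /setIP [_ h] := wW.
      have wa0 : w != a0 by apply/eqP => h; move: a0W; rewrite -h wW.
      have h1 : deg e w <= k + 1.
        by apply: notA_deg => //; apply/negP => /Aa0 h; rewrite h eqxx in wa0.
      suff hne : deg e w != k + 1.
        by move: h1; rewrite leq_eqVlt (negbTE hne) /= addn1 ltnS.
      apply: notB_deg => //; apply/negP => wB.
      have [b' b'B sub] := B_twin wB cB.
      have /setIP [a0w _] := wW.
      have h : a0 \in Nb w :&: I by apply/setIP; split => //; rewrite inNb sym_e -inNb.
      have := subsetP sub a0 h; rewrite inE => /eqP ab'.
      by have /setIdP [_ /eqP] := b'B; rewrite -ab' da0; flia.
    have h := NegC_ge (subsetIr _ _) Winj Wdeg.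
    by have := leq_trans (sq_mono Wc) h; rewrite NegC0.
-
  have SA3 : \sum_(y in A) (deg e y - k) <= 3.
    case: (set_0Vmem A) => [->|[y1 y1A]]; first by rewrite big_set0.
    have Ay1 : forall y, y \in A -> y = y1.
      move=> y yA; apply: A_inj => //.
      have /setIdP [yI hy] := yA; have /setIdP [y1I hy1] := y1A.
      move: noa0; rewrite negb_exists => /forallP hh.
      have := hh y; have := hh y1; rewrite yI y1I /=.
      have := xmax y; have := xmax y1; rewrite -/D; flia.
    rewrite (big_setD1 y1 y1A) /= big1.
      by have := xmax y1; rewrite -/D; flia.
    by move=> y /setD1P [yy1 /Ay1 h]; move: yy1; rewrite h eqxx.
  case: (boolP [exists y in I, deg e y == D]) => [/existsP [y1 /andP [y1I /eqP dy1]] | noy1].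
  + set P := Nb y1 :&: I.
    have pc : D <= #|P| + k := pend_card dy1.
    have Pdeg : forall z, z \in P -> deg e z <= k + 1 := fun z => pend_deg y1I dy1 (z := z).
    have PB : #|P :&: B| <= 1.
      apply: (@inj_const_card _ (k + 1)).
        by move=> y y' /setIP [yP _] /setIP [y'P _]; apply: (pend_inj y1I).
      by move=> y /setIP [_ /setIdP [_ /eqP]].
    have PB2 : #|B| = 2 -> #|P :&: B| = 0.
      move=> cB; apply/eqP; rewrite cards_eq0; apply/eqP/setP => b.
      rewrite inE [RHS]inE; apply/negP => /andP [bP bB].
      have [b' b'B sub] := B_twin bB cB.
      have /setIP [y1b _] := bP.
      have h : y1 \in Nb b :&: I by apply/setIP; split => //; rewrite inNb sym_e -inNb.
      have := subsetP sub y1 h; rewrite inE => /eqP yb'.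
      by have /setIdP [_ /eqP] := b'B; rewrite -yb' dy1; flia.
    have qc := cardsID B P.
    have ng : #|P :\: B| * (#|P :\: B| - 1) <= 2 * NegC.
      apply: NegC_ge.
      - by apply: subset_trans (subsetDl _ _) (subsetIr _ _).
      - by move=> y y' /setDP [yP _] /setDP [y'P _]; apply: (pend_inj y1I).
      - move=> y /setDP [yP yB]; have := Pdeg y yP.
        have /setIP [_ yI] := yP; have := notB_deg yI yB; flia.
    have : #|B| <= 1 \/ #|B| = 2 by flia.
    case=> [hb|hb].
      have q2 : 2 <= #|P :\: B| by flia.
      have := sq_mono q2; flia.
    have := PB2 hb => hb0.
    have q3 : 3 <= #|P :\: B| by flia.
    have := sq_mono q3; flia.
  + have A0 : A = set0.
      apply/setP => y; rewrite inE [RHS]inE; apply/negP => /andP [yI hy].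
      move: noy1 noa0; rewrite !negb_exists => /forallP /(_ y) h1 /forallP /(_ y).
      rewrite yI /= in h1 *; have := xmax y; rewrite -/D; flia.
    move: P4'; rewrite A0 big_set0; flia.
Qed.


Lemma full_out y : y \in I -> deg e y = k + 1 -> #|Nb y :&: I| <= 1 -> ~: I \subset Nb y.
Proof.
move=> yI dy c1.
have h := cardsID I (Nb y); rewrite -degE dy in h.
have : Nb y :\: I == ~: I.
  rewrite eqEcard; apply/andP; split; first by rewrite setDE subsetIr.
  rewrite -/k; flia.
by move/eqP => <-; apply: subsetDl.
Qed.

Lemma case_t1 : D = n + 1 ->
  (forall y, y \in I -> deg e y = k) /\ (forall v, v \notin I -> deg e v = D).
Proof.
move=> Dn; have dk := kD; rewrite cardT in dk.
have ki := KI; have pl := Pos_le; have bc := B_card.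
have kn : k = n by flia.
have A0 : A = set0.
  apply/setP => y; rewrite inE [RHS]inE; apply/negP => /andP [yI hy].
  by have := xmax y; rewrite -/D; flia.
rewrite A0 big_set0 add0n in pl.
have NB : NegC + Def <= #|B|.
  move: ki; rewrite Dn kn => ki; move: pl; rewrite -/Pos; fnia.
have xnI : x \notin I by rewrite inNb eirr.
have : #|B| = 0 \/ #|B| = 1 \/ #|B| = 2 by flia.
case=> [B0|[B1|B2]].
-
  have N0 : NegC = 0 by flia.
  have D0 : Def = 0 by flia.
  split.
  + move=> y yI; have := sum0_each N0 yI => h1.
    have yB : y \notin B.
      by apply/negP => yB; move: B0; rewrite (cardsD1 y B) yB.
    have := notB_deg yI yB; have := xmax y; rewrite -/D; flia.
  + move=> v vI; have vI' : v \in ~: I by rewrite inE.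
    have := sum0_each D0 vI'; have := xmax v; rewrite -/D; flia.
- (* one vertex of degree D in I *)
  exfalso.
  have [b bB] : exists b, b \in B by apply/set0Pn; rewrite -card_gt0 B1.
  have /setIdP [bI /eqP db] := bB.
  have dbD : deg e b = D by rewrite db; flia.
  set W := Nb b :&: I.
  have Wc : 1 <= #|W| by have := L2 b; rewrite -/W; flia.
  have Winj : {in W &, injective (deg e)} := pend_inj bI.
  have bW : b \notin W by rewrite inE inNb eirr.
  have Wdeg : forall w, w \in W -> 2 <= deg e w <= k.
    move=> w wW; have /setIP [bw wI] := wW.
    have h1 := pend_deg bI dbD wW.
    have hne : deg e w != k + 1.
      apply: notB_deg => //; apply/negP => wB.
      have wb := card1_eq (eq_leq B1) wB bB.
      by move: bW; rewrite -wb wW.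
    have h2 : deg e w <= k by move: h1; rewrite leq_eqVlt (negbTE hne) /= addn1 ltnS.
    rewrite h2 andbT.
    have : [set x; b] \subset Nb w.
      rewrite subUset !sub1set !inNb; apply/andP; split; last by rewrite sym_e -inNb.
      by rewrite sym_e -inNb.
    move/subset_leq_card; rewrite cards2 -degE.
    by rewrite (neq_e (etrans (esym (memI b)) bI)).
  have [w0 w0W] : exists w0, w0 \in W by apply/set0Pn; rewrite -card_gt0.
  have Defge : #|(Nb b :\: I) :\ x| <= Def.
    apply: (@leq_trans (\sum_(v in (Nb b :\: I) :\ x) (D - deg e v))).
      rewrite -sum1_card; apply: leq_sum => v /setD1P [vx /setDP [bv vI]].
      have := xmax v; rewrite -/D leq_eqVlt => /orP [/eqP dv|]; last by flia.
      exfalso; have /setIP [bw0 w0I] := w0W.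
      have g1 : x != v by rewrite eq_sym.
      have g2 : deg e x = deg e v by rewrite dv.
      have g3 : e x w0 by rewrite -memI.
      have g4 : e w0 b by rewrite sym_e -inNb.
      have g5 : e b v by rewrite -inNb.
      have g6 : x != b := neq_e (etrans (esym (memI b)) bI).
      have g7 : w0 != v by apply/eqP => h; move: vI; rewrite -h w0I.
      exact: (noP4 g1 g2 g3 g4 g5 g6 g7).
    apply: sum_sub; apply/subsetP => v /setD1P [_ /setDP [_ vI]]; by rewrite inE.
  have hb := cardsID I (Nb b); rewrite -degE -/W dbD in hb.
  have hx : #|Nb b :\: I| <= #|(Nb b :\: I) :\ x| + 1.
    rewrite (cardsD1 x (Nb b :\: I)); case: (x \in _); flia.
  have : 2 <= #|W| \/ #|W| = 1 by flia.
  case=> [W2|W1].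
  + have ng : #|W| * (#|W| - 1) <= 2 * NegC :=
      NegC_ge (subsetIr _ _) Winj (fun w wW => proj2 (andP (Wdeg w wW))).
    have := sq_mono W2 => h.
    have Wle : #|W| <= k - 1.
      apply: (@card_inj_lt T (fun w => k - deg e w)).
        move=> y y' yW y'W hh; apply: Winj => //.
        by have := Wdeg y yW; have := Wdeg y' y'W; move: hh; flia.
      by move=> y yW; have := Wdeg y yW; flia.
    flia.
  + have wW : forall w, w \in W -> w = w0 by move=> w wW; apply: card1_eq (eq_leq W1) wW w0W.
    have kle : k <= 2 by flia.
    have NegC0 : NegC = 0 by flia.
    have k2 : k = 2 by flia.
    have full : ~: I \subset Nb b.
      by apply: full_out => //; rewrite -/W W1.
    have /setIP [bw0 w0I] := w0W.
    have w0b : w0 != b by apply/eqP => h; move: bw0; rewrite h inNb eirr.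
    have cI1 : #|(I :\ b) :\ w0| = 1.
      have : #|I| = D by [].
      rewrite (cardsD1 b I) bI (cardsD1 w0 (I :\ b)) (_ : w0 \in I :\ b) /=; last first.
        by apply/setD1P.
      flia.
    have [c cIc] : exists c, c \in (I :\ b) :\ w0 by apply/set0Pn; rewrite -card_gt0 cI1.
    have /setD1P [cw0 /setD1P [cb cI]] := cIc.
    have dc : k <= deg e c by have := sum0_each NegC0 cI; flia.
    have Nc0 : #|Nb c :&: I| = 0.
      apply/eqP; rewrite cards_eq0; apply/eqP/setP => u; rewrite in_set0.
      apply/negP => /setIP [cu uI].
      have ub : u != b.
        apply/eqP => ub; subst u.
        have : c \in W by apply/setIP; split => //; rewrite inNb sym_e -inNb.
        by move/wW => cw; rewrite cw eqxx in cw0.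
      have uw : u != w0.
        apply/eqP => uw; subst u.
        have h : c \in Nb w0 :&: I by apply/setIP; split => //; rewrite inNb sym_e -inNb.
        have := subsetP (L3 bI dbD w0W) c h; rewrite inE => /eqP cb'.
        by rewrite cb' eqxx in cb.
      have uIc : u \in (I :\ b) :\ w0 by apply/setD1P; split => //; apply/setD1P.
      have uc : u = c := card1_eq (eq_leq cI1) uIc cIc.
      by move: cu; rewrite uc inNb eirr.
    have hc := cardsID I (Nb c); rewrite -degE Nc0 add0n in hc.
    have cx : 0 < #|(Nb c :\: I) :\ x|.
      have := cardsD1 x (Nb c :\: I); case: (x \in Nb c :\: I) => /=; flia.
    have [v /setD1P [vx /setDP [cv vI]]] : exists v, v \in (Nb c :\: I) :\ x.
      by apply/set0Pn; rewrite -card_gt0.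
    have bv : v \in Nb b by apply: (subsetP full); rewrite inE.
    apply: (noP4 (a := x) (u := c) (v := v) (b := b)).
    * exact: neq_e (etrans (esym (memI b)) bI).
    * by rewrite dbD.
    * by rewrite -memI.
    * by rewrite -inNb.
    * by rewrite sym_e -inNb.
    * by rewrite eq_sym.
    * exact: cb.
- (* two vertices of degree D in I *)
  exfalso.
  have [b bB] : exists b, b \in B by apply/set0Pn; rewrite -card_gt0 B2.
  have [b' /setD1P [b'b b'B]] : exists b', b' \in B :\ b.
    by apply/set0Pn; rewrite -card_gt0; move: B2; rewrite (cardsD1 b B) bB; flia.
  have /setIdP [bI /eqP db] := bB; have /setIdP [b'I /eqP db'] := b'B.
  have c1 : #|Nb b :&: I| <= 1 by apply: (L1c b'I bI b'b); rewrite db db'.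
  have bb' : b != b' by rewrite eq_sym.
  have c1' : #|Nb b' :&: I| <= 1 by apply: (L1c bI b'I bb'); rewrite db db'.
  have full := full_out bI db c1.
  have full' := full_out b'I db' c1'.
  have xc : x \in ~: I by rewrite inE.
  have [v /setD1P [vx vI]] : exists v, v \in (~: I) :\ x.
    apply/set0Pn; rewrite -card_gt0; move: (cardsD1 x (~: I)); rewrite xc -/k; flia.
  have bv : v \in Nb b := subsetP full v vI.
  have b'v : v \in Nb b' := subsetP full' v vI.
  apply: (noP4 (a := x) (u := b') (v := v) (b := b)).
  * exact: neq_e (etrans (esym (memI b)) bI).
  * by rewrite db; flia.
  * by rewrite -memI.
  * by rewrite -inNb.
  * by rewrite sym_e -inNb.
  * by rewrite eq_sym.
  * exact: b'b.
Qed.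


Lemma structure : D = n + 1 -> forall u v, e u v = ((u \in I) != (v \in I)).
Proof.
move=> Dn; have [hI hR] := case_t1 Dn.
have dk := kD; rewrite cardT in dk.
have kn : k = n by flia.
have cI : #|I| = n + 1 by rewrite -Dn.
have indep : forall y y', y \in I -> y' \in I -> ~~ e y y'.
  move=> y y' yI y'I; apply/negP => yy'.
  have yy'n : y != y' := neq_e yy'.
  have : 0 < #|(I :\ y) :\ y'|.
    move: cI; rewrite (cardsD1 y I) yI (cardsD1 y' (I :\ y)) (_ : y' \in I :\ y) /=.
      by flia.
    by apply/setD1P; split => //; rewrite eq_sym.
  rewrite card_gt0 => /set0Pn [z /setD1P [zy' /setD1P [zy zI]]].
  have sub := L1 zI y'I zy' (etrans (hI z zI) (esym (hI y' y'I))).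
  have : y \in Nb y' :&: I by apply/setIP; split => //; rewrite inNb sym_e.
  move/(subsetP sub); rewrite inE => /eqP yz.
  by rewrite yz eqxx in zy.
have NbI : forall y, y \in I -> Nb y = ~: I.
  move=> y yI; apply/eqP; rewrite eqEcard; apply/andP; split.
    apply/subsetP => z; rewrite inNb in_setC => yz; apply/negP => zI.
    by move: (indep y z yI zI); rewrite yz.
  by rewrite -degE hI.
have NbR : forall u, u \notin I -> Nb u = I.
  move=> u uI; apply/eqP; rewrite eq_sym eqEcard; apply/andP; split; last first.
    by rewrite -degE hR.
  by apply/subsetP => y yI; rewrite inNb sym_e -inNb (NbI y yI) in_setC.
move=> u v; case: (boolP (u \in I)) => uI.
  by rewrite -inNb (NbI u uI) in_setC; case: (v \in I).
by rewrite -inNb (NbR u uI); case: (v \in I).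
Qed.

End WithX.

Lemma main_result : graph_iso e (@Kbip n n.+1).
Proof.
have : 0 < #|T| by rewrite cardT addn1.
case/card_gt0P => x0 _.
case: (@arg_maxnP T x0 predT (deg e) isT) => x _ xmax'.
have xmax : forall y, deg e y <= deg e x := fun y => xmax' y isT.
have h1 := Dge xmax; have h2 := Dle x.
have : deg e x = n + 1 \/ deg e x = n + 2 \/ n + 3 <= deg e x by lia.
case=> [Dn|[Dn|Dn]]; last first.
- by case: (case_t3 xmax Dn).
- by case: (case_t2 xmax Dn).
have st := structure xmax Dn.
have cI : #|Nb x| = n.+1 by rewrite -degE Dn addn1.
have cC : #|~: Nb x| = n by move: (cardsC (Nb x)); rewrite cI cardT; lia.
have [y0 y0I] : exists y0, y0 \in Nb x by apply/set0Pn; rewrite -card_gt0 cI.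
have xC : x \in ~: Nb x by rewrite inE inNb eirr.
exact: (iso_of_bip y0I xC cI cC st).
Qed.

End Main.



Theorem theorem1p3 (n : nat) (T : finType) (e : rel T) :
  2 <= n ->
  simple_graph e ->
  #|T| = 2 * n + 1 ->
  n ^ 2 + n <= num_edges e ->
  (forall a b : T, a != b -> deg e a = deg e b -> ~ path3 e a b) ->
  graph_iso e (@Kbip n n.+1).
Proof.
move=> n2 [sym irr] cT m HP.
exact: (main_result sym irr HP n2 cT m).
Qed.
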